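(* Let $R$ be a ring and let $\mathcal{S}$ be a sublattice of the lattice $\mathbb{I}(R)$ of two-sided ideals of $R$ which is closed under arbitrary intersections and contains $\{0\}$ and $R$. For $T\subseteq \mathrm{Spec}_{\mathcal{S}}(R)$ put $\ker(T)=\bigcap_{\mathfrak{p}\in T}\mathfrak{p}$ (with $\ker(\emptyset)=R$) and $\overline{T}=\{\mathfrak{p}\in\mathrm{Spec}_{\mathcal{S}}(R): \mathfrak{p}\supseteq \ker(T)\}$. Then this closure operation satisfies the Kuratowski closure axioms: (1) $\overline{\emptyset}=\emptyset$; (2) $T\subseteq\overline{T}$ for all $T\subseteq\mathrm{Spec}_{\mathcal{S}}(R)$; (3) $\overline{\overline{T}}=\overline{T}$ for all $T$; (4) $\overline{T_1\cup T_2}=\overline{T_1}\cup\overline{T_2}$ for all $T_1,T_2\subseteq \mathrm{Spec}_{\mathcal{S}}(R)$.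
   Context: For a sublattice $\mathcal{S}$ of ideals of $R$ containing $\{0\}$ and $R$, an ideal $P\in\mathcal{S}$ is called $\mathcal{S}$-prime if $P\neq R$ and for all $I,J\in\mathcal{S}$, $IJ\subseteq P$ implies $I\subseteq P$ or $J\subseteq P$. $\mathrm{Spec}_{\mathcal{S}}(R)$ denotes the set of all $\mathcal{S}$-prime ideals of $R$. *)

(* Defs.v *)
From HB Require Import structures.
From mathcomp Require Import all_boot all_algebra.
From mathcomp Require Import boolp classical_sets.
Set Implicit Arguments. Unset Strict Implicit. Unset Printing Implicit Defensive.
Import GRing.Theory.
Local Open Scope classical_set_scope.
Local Open Scope ring_scope.

Section IdealLattice.
Variable R : nzRingType.

Definition is_ideal (I : set R) : Prop :=
  [/\ I 0,
      (forall x y, I x -> I y -> I (x - y)),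
      (forall r x, I x -> I (r * x)) &
      (forall r x, I x -> I (x * r))].

Inductive ideal_mul (I J : set R) : set R :=
  | ideal_mul0 : ideal_mul I J 0
  | ideal_mulM a b : I a -> J b -> ideal_mul I J (a * b)
  | ideal_mulD x y : ideal_mul I J x -> ideal_mul I J y -> ideal_mul I J (x + y).

Definition ideal_add (I J : set R) : set R :=
  [set x | exists a b, [/\ I a, J b & x = a + b]].

Definition good_sublattice (S : set (set R)) : Prop :=
  [/\ (forall I, S I -> is_ideal I),
      S [set 0], S setT,
      (forall I J, S I -> S J -> S (ideal_add I J) /\ S (I `&` J)) &
      (forall F : set (set R), F `<=` S -> S (\bigcap_(I in F) I))].

Definition S_prime (S : set (set R)) (P : set R) : Prop :=
  [/\ S P, P <> setT &
      forall I J, S I -> S J -> ideal_mul I J `<=` P -> I `<=` P \/ J `<=` P].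

Definition SpecS (S : set (set R)) : set (set R) := [set P | S_prime S P].

Definition kerT (T : set (set R)) : set R := \bigcap_(p in T) p.

Definition Sclosure (S : set (set R)) (T : set (set R)) : set (set R) :=
  [set p | SpecS S p /\ kerT T `<=` p].

End IdealLattice.

(* Main.v *)
Require Import Defs.
From HB Require Import structures.
From mathcomp Require Import all_boot all_algebra.
From mathcomp Require Import boolp classical_sets.
Local Open Scope classical_set_scope.
Import GRing.Theory.

Lemma ideal_addr (R : nzRingType) (I : set R) : is_ideal I ->
  forall x y, I x -> I y -> I (x + y)%R.
Proof.
case=> I0 IB _ _ x y Ix Iy.
have Ny : I (- y)%R by rewrite -[(- y)%R]add0r; apply: IB.
by rewrite -[y]opprK; apply: IB.
Qed.

Lemma part1 (R : nzRingType) (S : set (set R)) : Sclosure S set0 = set0.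
Proof.
apply/seteqP; split => // p [[_ pT _] Kp]; apply: pT.
apply/seteqP; split => // x _; apply: Kp => q; by [].
Qed.

Lemma part2 (R : nzRingType) (S : set (set R)) :
  forall T, T `<=` SpecS S -> T `<=` Sclosure S T.
Proof.
move=> T HT p Tp; split; first exact: HT.
by move=> x Kx; apply: Kx.
Qed.

Lemma part3 (R : nzRingType) (S : set (set R)) :
  forall T, T `<=` SpecS S -> Sclosure S (Sclosure S T) = Sclosure S T.
Proof.
move=> T HT; apply/seteqP; split; last first.
  apply: part2 => p [] //.
move=> p [Sp Kp]; split => // x Kx; apply: Kp => q [_ Kq]; exact: Kq.
Qed.

Lemma part4 (R : nzRingType) (S : set (set R)) (hS : good_sublattice S) :
      (forall T1 T2, T1 `<=` SpecS S -> T2 `<=` SpecS S ->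
         Sclosure S (T1 `|` T2) = Sclosure S T1 `|` Sclosure S T2).
Proof.
case: hS => Sid S0 ST SL SB.
have kerS : forall T, T `<=` SpecS S -> S (kerT T).
  move=> T HT; apply: SB => p /HT [].
  by [].
move=> T1 T2 H1 H2; apply/seteqP; split; last first.
  move=> p [[Sp Kp]|[Sp Kp]]; split => // x Kx; apply: Kp => q Tq; apply: Kx; by [left|right].
move=> p [[Sp pT Pp] Kp].
have K1 := kerS _ H1; have K2 := kerS _ H2.
have : ideal_mul (kerT T1) (kerT T2) `<=` p.
  move=> x; elim => [|a b Ka Kb|u v _ Hu _ Hv].
  - apply: Kp => q [] /=.
    + by move/H1 => -[/Sid [q0 _ _ _] _ _].
    + by move/H2 => -[/Sid [q0 _ _ _] _ _].
  - apply: Kp => q [] Tq.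
    + have [/Sid [_ _ _ M] _ _] := H1 _ Tq; apply: M; exact: Ka.
    + have [/Sid [_ _ M _] _ _] := H2 _ Tq; apply: M; exact: Kb.
  - exact: (@ideal_addr R p (Sid _ Sp) u v Hu Hv).
case/(Pp _ _ K1 K2) => H; [left|right]; exact: (conj (And3 Sp pT Pp) H).
Qed.

Theorem lemma3p2 (R : nzRingType) (S : set (set R)) (hS : good_sublattice S) :
  [/\ Sclosure S set0 = set0,
      (forall T, T `<=` SpecS S -> T `<=` Sclosure S T),
      (forall T, T `<=` SpecS S -> Sclosure S (Sclosure S T) = Sclosure S T) &
      (forall T1 T2, T1 `<=` SpecS S -> T2 `<=` SpecS S ->
         Sclosure S (T1 `|` T2) = Sclosure S T1 `|` Sclosure S T2)].
Proof.
split; [exact: part1|exact: part2|exact: part3|exact: (part4 _ _ hS)].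
Qed.
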